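(* Let $g\in\mathrm{Sp}(1,1)$. Then every element of $g\,\mathrm{SU}(1,1)\,g^{-1}$ has real trace if and only if $g\in\mathrm{Sp}(1)\cdot\mathrm{SU}(1,1)$, i.e. $g=(hI_2)u$ for some unit quaternion $h$ and some $u\in\mathrm{SU}(1,1)$.
   Context: $\mathbb H$ denotes the quaternions. $\mathrm{Sp}(1,1)=\{A\in\mathrm{GL}(2,\mathbb H): A^*I_{1,1}A=I_{1,1}\}$, with $A^*$ the conjugate transpose and $I_{1,1}=\mathrm{diag}(1,-1)$. $\mathrm{SU}(1,1)\subset\mathrm{Sp}(1,1)$ is the subgroup of complex matrices of determinant $1$ preserving $I_{1,1}$. $\mathrm{Sp}(1)$ is the group of unit quaternions, and $h\in\mathrm{Sp}(1)$ is identified with the scalar matrix $hI_2\in\mathrm{Sp}(1,1)$. The trace of a quaternionic matrix is the sum of its diagonal entries. *)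

(* Defs.v *)
From HB Require Import structures.
From mathcomp Require Import all_boot all_order all_algebra.
From mathcomp Require Import reals.
Set Implicit Arguments. Unset Strict Implicit. Unset Printing Implicit Defensive.
Import Order.TTheory GRing.Theory Num.Theory.
Local Open Scope ring_scope.

Section Quat.
Variable R : realType.

(** Real quaternions q = q0 + q1 i + q2 j + q3 k. *)
Record quat := Quat { q0 : R; q1 : R; q2 : R; q3 : R }.

Definition qzero : quat := Quat 0 0 0 0.
Definition qone : quat := Quat 1 0 0 0.
Definition qadd (p q : quat) : quat :=
  Quat (q0 p + q0 q) (q1 p + q1 q) (q2 p + q2 q) (q3 p + q3 q).
Definition qopp (p : quat) : quat := Quat (- q0 p) (- q1 p) (- q2 p) (- q3 p).
Definition qsub (p q : quat) : quat := qadd p (qopp q).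
(** Hamilton product (i^2 = j^2 = k^2 = ijk = -1). *)
Definition qmul (p q : quat) : quat :=
  Quat (q0 p * q0 q - q1 p * q1 q - q2 p * q2 q - q3 p * q3 q)
       (q0 p * q1 q + q1 p * q0 q + q2 p * q3 q - q3 p * q2 q)
       (q0 p * q2 q - q1 p * q3 q + q2 p * q0 q + q3 p * q1 q)
       (q0 p * q3 q + q1 p * q2 q - q2 p * q1 q + q3 p * q0 q).
Definition qconj (p : quat) : quat := Quat (q0 p) (- q1 p) (- q2 p) (- q3 p).

Definition qreal (p : quat) : Prop := q1 p = 0 /\ q2 p = 0 /\ q3 p = 0.
Definition qcomplex (p : quat) : Prop := q2 p = 0 /\ q3 p = 0.
Definition unit_quat (p : quat) : Prop :=
  q0 p ^+ 2 + q1 p ^+ 2 + q2 p ^+ 2 + q3 p ^+ 2 = 1.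

Record mat2 := Mat2 { m11 : quat; m12 : quat; m21 : quat; m22 : quat }.

Definition mmul (A B : mat2) : mat2 :=
  Mat2 (qadd (qmul (m11 A) (m11 B)) (qmul (m12 A) (m21 B)))
       (qadd (qmul (m11 A) (m12 B)) (qmul (m12 A) (m22 B)))
       (qadd (qmul (m21 A) (m11 B)) (qmul (m22 A) (m21 B)))
       (qadd (qmul (m21 A) (m12 B)) (qmul (m22 A) (m22 B))).
Definition mstar (A : mat2) : mat2 :=
  Mat2 (qconj (m11 A)) (qconj (m21 A)) (qconj (m12 A)) (qconj (m22 A)).
Definition mone : mat2 := Mat2 qone qzero qzero qone.
Definition I11 : mat2 := Mat2 qone qzero qzero (qopp qone).
Definition mscal (h : quat) : mat2 := Mat2 h qzero qzero h.
Definition mtrace (A : mat2) : quat := qadd (m11 A) (m22 A).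

(** Sp(1,1) = { A in GL(2,H) | A^* I_{1,1} A = I_{1,1} }
    (the identity forces invertibility). *)
Definition in_Sp11 (A : mat2) : Prop :=
  mmul (mmul (mstar A) I11) A = I11.

(** SU(1,1): complex matrices of determinant 1 preserving I_{1,1}.
    For complex entries the determinant is m11 m22 - m12 m21. *)
Definition in_SU11 (U : mat2) : Prop :=
  [/\ (qcomplex (m11 U) /\ qcomplex (m12 U) /\ qcomplex (m21 U) /\ qcomplex (m22 U)),
      qsub (qmul (m11 U) (m22 U)) (qmul (m12 U) (m21 U)) = qone
    & mmul (mmul (mstar U) I11) U = I11].

End Quat.

(* Main.v *)
Require Import Defs.
From HB Require Import structures.
From mathcomp Require Import all_boot all_order all_algebra.
From mathcomp Require Import reals ring lra.
Local Open Scope ring_scope.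

Module L0.
Set Implicit Arguments. Unset Strict Implicit. Unset Printing Implicit Defensive.
Import Order.TTheory GRing.Theory Num.Theory.
Local Open Scope ring_scope.
Section S.
Variable R : realType.
Implicit Types p q : quat R.
Lemma quatP (p q : quat R) : q0 p = q0 q -> q1 p = q1 q -> q2 p = q2 q -> q3 p = q3 q -> p = q.
Proof. by case: p; case: q => /= ? ? ? ? ? ? ? ? -> -> -> ->. Qed.
Lemma mat2P (A B : mat2 R) : m11 A = m11 B -> m12 A = m12 B -> m21 A = m21 B -> m22 A = m22 B -> A = B.
Proof. by case: A; case: B => /= ? ? ? ? ? ? ? ? -> -> -> ->. Qed.
Ltac qdes := repeat match goal with
  | A : mat2 R |- _ => destruct A
  | p : quat R |- _ => destruct p end.
Ltac qring := qdes; repeat (apply: mat2P || apply: quatP); rewrite /= ; ring.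
Definition qi : quat R := Quat 0 1 0 0.
Definition qN p : R := q0 p ^+ 2 + q1 p ^+ 2 + q2 p ^+ 2 + q3 p ^+ 2.
Definition qscale (r : R) p := Quat (r * q0 p) (r * q1 p) (r * q2 p) (r * q3 p).
Lemma core (n : R) (C D : quat R) : 1 <= n -> qN C = n*(n-1) -> qN D = n^+2 ->
 qreal (qsub (qmul (qconj C) D) (qmul D (qconj C))) ->
 qreal (qsub (qmul (qmul qi (qconj D)) C) (qmul (qmul C qi) (qconj D))) ->
 qreal (qsub (qadd (qscale (n^+4) qi) (qmul (qmul (qmul (qconj C) D) qi) (qconj (qmul (qconj C) D))))
    (qadd (qscale (n^+2) (qmul (qmul C qi) (qconj C))) (qscale (n^+2) (qmul (qmul D qi) (qconj D))))) ->
 qcomplex C /\ qcomplex D.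
Proof.
case: C => c0 c1 c2 c3; case: D => d0 d1 d2 d3.
rewrite /qreal /qcomplex /qN /= => Hn HC HD [X1 [X2 X3]] [Y1 [Y2 Y3]] [Z1 [Z2 Z3]].
have x1 : c2*d3 - c3*d2 = 0 by lra.
have x2 : c3*d1 - c1*d3 = 0 by lra.
have x3 : c1*d2 - c2*d1 = 0 by lra.
have y1 : d2*c2 + d3*c3 = 0 by lra.
have y2 : d0*c3 + c1*d2 = 0 by lra.
have y3 : d0*c2 - c1*d3 = 0 by lra.
have n0 : 0 < n by lra.
have [c2z c3z] : c2 = 0 /\ c3 = 0.
  have hs : d0 * (c2^+2 + c3^+2) = c2*(d0*c2 - c1*d3) + c3*(d0*c3 + c1*d2) + c1*(c2*d3 - c3*d2) by ring.
  rewrite y3 y2 x1 !mulr0 !addr0 in hs.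
  have hd2 : d2 * (c2^+2 + c3^+2) = c2*(d2*c2 + d3*c3) - c3*(c2*d3 - c3*d2) by ring.
  rewrite y1 x1 !mulr0 subr0 in hd2.
  have hd3 : d3 * (c2^+2 + c3^+2) = c3*(d2*c2 + d3*c3) + c2*(c2*d3 - c3*d2) by ring.
  rewrite y1 x1 !mulr0 addr0 in hd3.
  case: (eqVneq (c2^+2 + c3^+2) 0) => [s0|sn0]; first by split; nra.
  have d0z : d0 = 0 by apply/eqP; move/eqP: hs; rewrite mulf_eq0 (negPf sn0) orbF.
  have d2z : d2 = 0 by apply/eqP; move/eqP: hd2; rewrite mulf_eq0 (negPf sn0) orbF.
  have d3z : d3 = 0 by apply/eqP; move/eqP: hd3; rewrite mulf_eq0 (negPf sn0) orbF.
  subst d0 d2 d3.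
  have d1n : d1 != 0 by apply/eqP => d1z; subst d1; nra.
  have e2 : c2 * d1 = 0 by lra.
  have e3 : c3 * d1 = 0 by lra.
  by split; apply: (mulIf d1n); rewrite mul0r.
subst c2 c3.
split; first by [].
case: (eqVneq c1 0) => [c1z|c1n].
  subst c1.
  have hc0 : c0^+2 = n^+2 - n by nra.
  set Q := d0^+2 + d1^+2 - d2^+2 - d3^+2.
  have hz : n^+4 + c0^+2*Q - n^+2*c0^+2 - n^+2*Q = 0 by apply: (etrans _ Z1); rewrite /Q; ring.
  rewrite hc0 in hz.
  have hq : n * (n^+2 - Q) = 0 by apply: (etrans _ hz); ring.
  have hq2 : n^+2 - Q = 0 by apply: (mulfI (negbT (gt_eqF n0))); rewrite mulr0.
  move/eqP: hq2; rewrite subr_eq0 => /eqP {}hq.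
  rewrite /Q in hq.
  have h23 : d2^+2 + d3^+2 = 0 by lra.
  move/eqP: h23; rewrite paddr_eq0 ?sqr_ge0 // !sqrf_eq0 => /andP [/eqP -> /eqP ->]; by [].
have e2 : c1 * d2 = 0 by lra.
have e3 : c1 * d3 = 0 by lra.
by split; apply: (mulfI c1n); rewrite mulr0.
Qed.
End S.

End L0.
Import L0.

Module L1B.
Set Implicit Arguments. Unset Strict Implicit. Unset Printing Implicit Defensive.
Import Order.TTheory GRing.Theory Num.Theory.
Local Open Scope ring_scope.
Section S.
Variable R : realType.
Implicit Types p q a b c d h x y Y e : quat R.
Lemma quatP (p q : quat R) : q0 p = q0 q -> q1 p = q1 q -> q2 p = q2 q -> q3 p = q3 q -> p = q.
Proof. by case: p; case: q => /= ? ? ? ? ? ? ? ? -> -> -> ->. Qed.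
Lemma mat2P (A B : mat2 R) : m11 A = m11 B -> m12 A = m12 B -> m21 A = m21 B -> m22 A = m22 B -> A = B.
Proof. by case: A; case: B => /= ? ? ? ? ? ? ? ? -> -> -> ->. Qed.
Ltac qdes := repeat match goal with
  | A : mat2 R |- _ => destruct A
  | p : quat R |- _ => destruct p end.
Ltac qring := qdes; repeat (apply: mat2P || apply: quatP); rewrite /qN /qscale /= ; ring.
Definition qcpx p := q2 p = 0 /\ q3 p = 0.
Definition lmul p (M : mat2 R) := Mat2 (qmul p (m11 M)) (qmul p (m12 M)) (qmul p (m21 M)) (qmul p (m22 M)).
Definition mscaleR (r : R) (M : mat2 R) := Mat2 (qscale r (m11 M)) (qscale r (m12 M)) (qscale r (m21 M)) (qscale r (m22 M)).
Definition qdet (M : mat2 R) := qsub (qmul (m11 M) (m22 M)) (qmul (m12 M) (m21 M)).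
Definition adjc (M : mat2 R) := Mat2 (m22 M) (qopp (m12 M)) (qopp (m21 M)) (m11 M).
Definition ginv (M : mat2 R) := Mat2 (qconj (m11 M)) (qopp (qconj (m21 M))) (qopp (qconj (m12 M))) (qconj (m22 M)).

Lemma qN_mul p q : qN (qmul p q) = qN p * qN q.
Proof. qdes; rewrite /qN /=; ring. Qed.
Lemma qN_conj p : qN (qconj p) = qN p.
Proof. qdes; rewrite /qN /=; ring. Qed.
Lemma qN_ge0 p : 0 <= qN p.
Proof. by rewrite /qN !addr_ge0 ?sqr_ge0. Qed.
Lemma qN_scale r p : qN (qscale r p) = r^+2 * qN p.
Proof. qdes; rewrite /qN /=; ring. Qed.

Lemma qreal_conjmul a Y : qreal Y -> qreal (qmul (qmul (qconj a) Y) a).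
Proof. qdes; rewrite /qreal /= => -[-> [-> ->]]; split; [|split]; ring. Qed.
Lemma qreal_mulconj a Y : qreal Y -> qreal (qmul (qmul a Y) (qconj a)).
Proof. qdes; rewrite /qreal /= => -[-> [-> ->]]; split; [|split]; ring. Qed.
Lemma qreal_scale r Y : qreal Y -> qreal (qscale r Y).
Proof. qdes; rewrite /qreal /= => -[-> [-> ->]]; rewrite !mulr0. by []. Qed.
Lemma qcpx_mul p q : qcpx p -> qcpx q -> qcpx (qmul p q).
Proof. qdes; rewrite /qcpx /= => -[-> ->] [-> ->]; split; ring. Qed.
Lemma qcpx_conj p : qcpx p -> qcpx (qconj p).
Proof. qdes; rewrite /qcpx /= => -[-> ->]; rewrite oppr0. by []. Qed.
Lemma qcpx_scale r p : qcpx p -> qcpx (qscale r p).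
Proof. qdes; rewrite /qcpx /= => -[-> ->]; rewrite mulr0. by []. Qed.
Lemma qcpx_add p q : qcpx p -> qcpx q -> qcpx (qadd p q).
Proof. qdes; rewrite /qcpx /= => -[-> ->] [-> ->]; rewrite addr0. by []. Qed.
Lemma qcpx_comm p q : qcpx p -> qcpx q -> qmul p q = qmul q p.
Proof. qdes; rewrite /qcpx /= => -[-> ->] [-> ->]; apply: quatP => /=; ring. Qed.

Lemma unit_mulconj h x : unit_quat h -> qmul h (qmul (qconj h) x) = x.
Proof.
qdes; rewrite /unit_quat /= => H; apply: quatP => /=.
all: rewrite -[RHS]mulr1 -H; ring.
Qed.
Lemma unit_mulconj' h : unit_quat h -> qmul h (qconj h) = qone R.
Proof.
qdes; rewrite /unit_quat /= => H; apply: quatP => /=; rewrite -?H; ring.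
Qed.

Lemma mmulA (A B C : mat2 R) : mmul A (mmul B C) = mmul (mmul A B) C.
Proof. qring. Qed.
Lemma mmul1l (A : mat2 R) : mmul (mone R) A = A.
Proof. qring. Qed.
Lemma mmul1r (A : mat2 R) : mmul A (mone R) = A.
Proof. qring. Qed.

Lemma lmul_Sp p g : unit_quat p -> in_Sp11 g -> in_Sp11 (lmul p g).
Proof.
move=> Hp H; rewrite /in_Sp11.
have -> : mmul (mmul (mstar (lmul p g)) (I11 R)) (lmul p g) = mscaleR (qN p) (mmul (mmul (mstar g) (I11 R)) g) by qring.
rewrite H; move: Hp; rewrite /unit_quat -/(qN p) => ->.
rewrite /mscaleR /qscale /=; apply: mat2P; apply: quatP => /=; ring.
Qed.
End S.

End L1B.
Import L1B.

Module T6.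
Set Implicit Arguments. Unset Strict Implicit. Unset Printing Implicit Defensive.
Import Order.TTheory GRing.Theory Num.Theory.
Local Open Scope ring_scope.
Section S.
Variable R : realType.
Implicit Types p q a b c d h x y Y e : quat R.
Ltac qdes := repeat match goal with
  | A : mat2 R |- _ => destruct A
  | p : quat R |- _ => destruct p end.
Ltac qring := qdes; repeat (apply: mat2P || apply: quatP); rewrite /qN /qscale /= ; ring.
Notation i := (qi R).
Definition XX a b c d := qsub (qadd (qmul (qmul a i) (qconj a)) (qmul (qmul b i) (qconj b))) (qadd (qmul (qmul c i) (qconj c)) (qmul (qmul d i) (qconj d))).
Definition YY a b c d := qsub (qmul b (qconj a)) (qmul d (qconj c)).
Definition ZZ a b c d := qsub (qmul (qmul a i) (qconj b)) (qmul (qmul c i) (qconj d)).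

Lemma I2 a b c d : qmul (qmul (qconj a) (YY a b c d)) a =
  qadd (qscale (qN a) (qsub (qmul (qconj a) b) (qmul (qconj c) d)))
   (qsub (qmul (qconj (qmul (qconj a) c)) (qmul (qconj a) d)) (qmul (qmul (qconj a) d) (qconj (qmul (qconj a) c)))).
Proof. rewrite /YY; qring. Qed.
Lemma I3 a b c d : qmul (qmul (qconj a) (ZZ a b c d)) a =
  qadd (qmul i (qconj (qscale (qN a) (qsub (qmul (qconj a) b) (qmul (qconj c) d)))))
   (qsub (qmul (qmul i (qconj (qmul (qconj a) d))) (qmul (qconj a) c)) (qmul (qmul (qmul (qconj a) c) i) (qconj (qmul (qconj a) d)))).
Proof. rewrite /ZZ; qring. Qed.

Definition H1e (n : R) C D := qsub (qadd (qscale (n^+4) i) (qmul (qmul (qmul (qconj C) D) i) (qconj (qmul (qconj C) D))))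
    (qadd (qscale (n^+2) (qmul (qmul C i) (qconj C))) (qscale (n^+2) (qmul (qmul D i) (qconj D)))).
Lemma I1 a b c d : qscale (qN a ^+ 2) (qmul (qmul (qconj a) (XX a b c d)) a) =
  qadd (H1e (qN a) (qmul (qconj a) c) (qmul (qconj a) d))
   (qscale (qN a ^+ 2) (qsub (qmul (qmul (qmul (qconj a) b) i) (qconj (qmul (qconj a) b))) (qmul (qmul (qmul (qconj c) d) i) (qconj (qmul (qconj c) d))))).
Proof. rewrite /XX /H1e; qring. Qed.

Definition v1 := Mat2 i (qzero R) (qzero R) (qopp i).
Definition v2 := Mat2 (Quat 1 1 0 0) (qone R) (qone R) (Quat 1 (-1) 0 0).
Definition v3 := Mat2 (Quat 1 1 0 0) i (qopp i) (Quat 1 (-1) 0 0).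
Lemma v1_SU : in_SU11 v1.
Proof. rewrite /v1 /qi; split; first by rewrite /qcomplex /qzero /qone /qopp /=; repeat split; rewrite ?oppr0. all: repeat (apply: mat2P || apply: quatP); rewrite /=; ring. Qed.
Lemma v2_SU : in_SU11 v2.
Proof. rewrite /v2 /qi; split; first by rewrite /qcomplex /qzero /qone /qopp /=; repeat split; rewrite ?oppr0. all: repeat (apply: mat2P || apply: quatP); rewrite /=; ring. Qed.
Lemma v3_SU : in_SU11 v3.
Proof. rewrite /v3 /qi; split; first by rewrite /qcomplex /qzero /qone /qopp /=; repeat split; rewrite ?oppr0. all: repeat (apply: mat2P || apply: quatP); rewrite /=; ring. Qed.
Definition WW a b c d := Quat (qN a - qN b - qN c + qN d) 0 0 0.
Lemma T1 a b c d : mtrace (mmul (mmul (Mat2 a b c d) v1) (ginv (Mat2 a b c d))) = XX a b c d.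
Proof. rewrite /XX; qring. Qed.
Lemma T2 a b c d : mtrace (mmul (mmul (Mat2 a b c d) v2) (ginv (Mat2 a b c d))) =
  qadd (qadd (WW a b c d) (XX a b c d)) (qsub (YY a b c d) (qconj (YY a b c d))).
Proof. rewrite /XX /YY /WW; qring. Qed.
Lemma T3 a b c d : mtrace (mmul (mmul (Mat2 a b c d) v3) (ginv (Mat2 a b c d))) =
  qadd (qadd (WW a b c d) (XX a b c d)) (qsub (qconj (ZZ a b c d)) (ZZ a b c d)).
Proof. rewrite /XX /ZZ /WW; qring. Qed.
End S.

End T6.
Import T6.

Module T8.
Set Implicit Arguments. Unset Strict Implicit. Unset Printing Implicit Defensive.
Import Order.TTheory GRing.Theory Num.Theory.
Local Open Scope ring_scope.
Section S.
Variable R : realType.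
Implicit Types p q a b c d h x y Y e : quat R.
Ltac qdes := repeat match goal with
  | A : mat2 R |- _ => destruct A
  | p : quat R |- _ => destruct p end.
Ltac qring := qdes; repeat (apply: mat2P || apply: quatP); rewrite /qN /qscale /= ; ring.

Lemma spE a b c d : mmul (mmul (mstar (Mat2 a b c d)) (I11 R)) (Mat2 a b c d) =
  Mat2 (qsub (qmul (qconj a) a) (qmul (qconj c) c)) (qsub (qmul (qconj a) b) (qmul (qconj c) d))
       (qsub (qmul (qconj b) a) (qmul (qconj d) c)) (qsub (qmul (qconj b) b) (qmul (qconj d) d)).
Proof. qring. Qed.

Lemma qsub_eq0 p q : qsub p q = qzero R -> p = q.
Proof. qdes; rewrite /qsub /qadd /qopp /= => -[] *; apply: quatP => /=; lra. Qed.

Lemma sp_facts a b c d : in_Sp11 (Mat2 a b c d) -> [/\ qN a = 1 + qN c, qN d = 1 + qN b & qmul (qconj a) b = qmul (qconj c) d].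
Proof.
rewrite /in_Sp11 spE /I11 => -[e1 _ _ _ f1 f2 f3 f4 _ _ _ _ h1 _ _ _].
split; first by rewrite /qN; lra.
  by rewrite /qN; lra.
apply: quatP => /=; lra.
Qed.

Lemma qscale_eq0 r p : r != 0 -> qscale r p = qzero R -> p = qzero R.
Proof.
move=> rn; case: p => p0 p1 p2 p3; rewrite /qscale /= => -[] /eqP; rewrite mulf_eq0 (negPf rn) /= => /eqP ->.
move/eqP; rewrite mulf_eq0 (negPf rn) /= => /eqP ->.
move/eqP; rewrite mulf_eq0 (negPf rn) /= => /eqP ->.
by move/eqP; rewrite mulf_eq0 (negPf rn) /= => /eqP ->.
Qed.

Lemma Nb_Nc a b c d : in_Sp11 (Mat2 a b c d) -> qN b = qN c.
Proof.
move=> /sp_facts [ha hd e].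
have := congr1 (@qN R) e; rewrite !qN_mul !qN_conj ha hd.
move: (qN b) (qN c) => x y; lra.
Qed.

Lemma ginv_l a b c d : in_Sp11 (Mat2 a b c d) -> mmul (ginv (Mat2 a b c d)) (Mat2 a b c d) = mone R.
Proof.
move=> H.
have -> : mmul (ginv (Mat2 a b c d)) (Mat2 a b c d) = mmul (I11 R) (mmul (mmul (mstar (Mat2 a b c d)) (I11 R)) (Mat2 a b c d)) by qring.
rewrite H; qring.
Qed.

Lemma ginv_r a b c d : in_Sp11 (Mat2 a b c d) -> mmul (Mat2 a b c d) (ginv (Mat2 a b c d)) = mone R.
Proof.
move=> H; have hbc := Nb_Nc H; case/sp_facts: H => ha hd e.
set P := qsub (qmul b (qconj d)) (qmul a (qconj c)).
have K : qscale (qN a) P = qadd (qmul (qmul a (qsub (qmul (qconj a) b) (qmul (qconj c) d))) (qconj d)) (qscale (qN d - qN a) (qmul a (qconj c))) by rewrite /P; qring.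
have hda : qN d = qN a by rewrite hd ha hbc addrC.
rewrite e hda in K.
have K2 : forall x y z w v : quat R, qadd (qmul (qmul x (qsub y y)) z) (qscale (qN w - qN w) v) = qzero R by move=> *; qring.
rewrite K2 in K.
have na : qN a != 0 by rewrite ha; apply/negP => /eqP; have := qN_ge0 c; lra.
have P0 := qscale_eq0 na K.
have -> : mmul (Mat2 a b c d) (ginv (Mat2 a b c d)) = Mat2 (Quat (qN a - qN b) 0 0 0) P (qconj (qopp P)) (Quat (qN d - qN c) 0 0 0) by rewrite /P; qring.
rewrite P0 hda ha hbc.
apply: mat2P; apply: quatP => /=; ring.
Qed.

Lemma SU_tr_real (v : mat2 R) : in_SU11 v -> qreal (mtrace v).
Proof.
case: v => [[p0 p1 p2 p3] [w0 w1 w2 w3] [r0 r1 r2 r3] [s0 s1 s2 s3]].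
move=> [[[/= hp2 hp3] [[/= hw2 hw3] [[/= hr2 hr3] [/= hs2 hs3]]]] Hd HI].
subst p2 p3 w2 w3 r2 r3 s2 s3.
move: HI; rewrite spE /I11 => -[e1 _ _ _ f0 f1 _ _ _ _ _ _ _ _ _ _].
have g0 := congr1 (@Defs.q0 R) Hd; have g1 := congr1 (@Defs.q1 R) Hd; simpl in g0, g1.
rewrite /qreal /=; split; last by split; ring.
have E : p0^+2 + p1^+2 - r0^+2 - r1^+2 - 1 = 0 by lra.
have G0 : p0*s0 - p1*s1 - w0*r0 + w1*r1 - 1 = 0 by lra.
have G1 : p0*s1 + p1*s0 - w0*r1 - w1*r0 = 0 by lra.
have F0 : p0*w0 + p1*w1 - r0*s0 - r1*s1 = 0 by lra.
have F1 : p0*w1 - p1*w0 - r0*s1 + r1*s0 = 0 by lra.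
have -> : p1 + s1 = -(s1 * (p0^+2 + p1^+2 - r0^+2 - r1^+2 - 1)) + (p0 * (p0*s1 + p1*s0 - w0*r1 - w1*r0) - p1 * (p0*s0 - p1*s1 - w0*r0 + w1*r1 - 1)) + (r0 * (p0*w1 - p1*w0 - r0*s1 + r1*s0) + r1 * (p0*w0 + p1*w1 - r0*s0 - r1*s1)) by ring.
rewrite E G0 G1 F0 F1; ring.
Qed.
Definition cpxm (u : mat2 R) := qcomplex (m11 u) /\ qcomplex (m12 u) /\ qcomplex (m21 u) /\ qcomplex (m22 u).

Ltac cdes u := case: u => [[? ? ? ?] [? ? ? ?] [? ? ? ?] [? ? ? ?]];
  let a := fresh in let b := fresh in let c := fresh in let d := fresh in
  let e := fresh in let f := fresh in let g := fresh in let h := fresh in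
  move=> [[/= a b] [[/= c d] [[/= e f] [/= g h]]]]; subst.

Lemma adj_r (u : mat2 R) : cpxm u -> mmul u (adjc u) = mscal (qdet u).
Proof. cdes u; qring. Qed.
Lemma adj_l (u : mat2 R) : cpxm u -> mmul (adjc u) u = mscal (qdet u).
Proof. cdes u; qring. Qed.
Lemma tr_uvu (u v : mat2 R) : cpxm u -> cpxm v -> mtrace (mmul (mmul u v) (adjc u)) = qmul (qdet u) (mtrace v).
Proof. cdes u; cdes v; qring. Qed.
Lemma tr_hk h k (u v W : mat2 R) : mtrace (mmul (mmul (mmul (mscal h) u) v) (mmul W (mscal k))) = qmul (qmul h (mtrace (mmul (mmul u v) W))) k.
Proof. qring. Qed.
Lemma mscal_mul h k : mmul (mscal h) (mscal k) = mscal (qmul h k).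
Proof. qring. Qed.
Lemma mscal1 : mscal (qone R) = mone R.
Proof. by []. Qed.
Lemma unit_conj h : unit_quat h -> unit_quat (qconj h).
Proof. rewrite /unit_quat /=; move=> <-; ring. Qed.
Lemma qmul1l p : qmul (qone R) p = p.
Proof. qring. Qed.

Lemma back g h u : unit_quat h -> in_SU11 u -> g = mmul (mscal h) u ->
  forall v, in_SU11 v -> forall gi, mmul g gi = mone R -> mmul gi g = mone R ->
  qreal (mtrace (mmul (mmul g v) gi)).
Proof.
move=> Hh [cu du _] -> v Hv gi H1 H2.
have Hv' := Hv; case: Hv' => cv _ _.
set gi' := mmul (adjc u) (mscal (qconj h)).
have E1 : mmul (mmul (mscal h) u) gi' = mone R.
  rewrite /gi' -mmulA (mmulA u) adj_r // /qdet du mscal1 mmul1l mscal_mul unit_mulconj' //.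
have E2 : gi = gi'.
  by rewrite -[gi]mmul1r -E1 mmulA H2 mmul1l.
rewrite E2 /gi' tr_hk tr_uvu // /qdet du qmul1l.
apply: qreal_mulconj; exact: SU_tr_real.
Qed.
End S.

End T8.
Import T8.

Module T9.
Set Implicit Arguments. Unset Strict Implicit. Unset Printing Implicit Defensive.
Import Order.TTheory GRing.Theory Num.Theory.
Local Open Scope ring_scope.
Section S.
Variable R : realType.
Implicit Types p q a b c d h x y Y e P Q A B C D : quat R.
Ltac qdes := repeat match goal with
  | A : mat2 R |- _ => destruct A
  | p : quat R |- _ => destruct p end.
Ltac qring := qdes; repeat (apply: mat2P || apply: quatP); rewrite /qN /qscale /= ; ring.
Notation i := (qi R).

Lemma sqrt_phase (n : R) D : 0 < n -> qcomplex D -> qN D = n^+2 ->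
  exists e, [/\ qcomplex e, 0 < qN e & qmul (qmul (qconj e) (qconj e)) D = Quat (n * qN e) 0 0 0].
Proof.
case: D => D0 D1 D2 D3 n0 [/= -> ->]; rewrite /qN /= => HD.
have hD : D0^+2 + D1^+2 = n^+2 by lra.
case: (eqVneq (D0 + n) 0) => h0.
  have d0 : D0 = - n by lra.
  have d1 : D1 = 0.
    have : D1^+2 = 0 by rewrite d0 sqrrN in hD; lra.
    by move/eqP; rewrite sqrf_eq0 => /eqP.
  exists i; split; first by rewrite /qi.
    rewrite /qi /qN /=; lra.
  rewrite /qi /qN d0 d1; apply: quatP => /=; ring.
exists (Quat (n + D0) D1 0 0); split; first by [].
  have : 0 < (D0 + n)^+2 by rewrite exprn_even_gt0 //= h0 orbT.
  rewrite /qN /=; have := sqr_ge0 D1; lra.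
apply: quatP; rewrite /qN /=.
- apply/eqP; rewrite -subr_eq0; apply/eqP.
  transitivity ((n + D0) * (D0^+2 + D1^+2 - n^+2)); first ring.
  by rewrite hD subrr mulr0.
- apply/eqP; rewrite -subr_eq0; apply/eqP.
  transitivity (- D1 * (D0^+2 + D1^+2 - n^+2)); first ring.
  by rewrite hD subrr mulr0.
- ring.
- ring.
Qed.

Lemma det_lemma (s : R) e A B C D : qcomplex e -> qcomplex A -> qcomplex B -> qcomplex C -> qcomplex D ->
  qsub (qmul (qscale s (qmul (qconj e) A)) (qscale s (qmul (qconj e) D)))
       (qmul (qscale s (qmul (qconj e) B)) (qscale s (qmul (qconj e) C)))
  = qscale (s^+2) (qmul (qmul (qconj e) (qconj e)) (qsub (qmul A D) (qmul B C))).
Proof.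
case: e => ? ? ? ? [/= -> ->]; case: A => ? ? ? ? [/= -> ->]; case: B => ? ? ? ? [/= -> ->].
case: C => ? ? ? ? [/= -> ->]; case: D => ? ? ? ? [/= -> ->]; qring.
Qed.

Lemma hx_lemma (s : R) a e x : qmul (qconj (qscale s (qmul a e))) x = qscale s (qmul (qconj e) (qmul (qconj a) x)).
Proof. qring. Qed.

Lemma qcpx_unscale (r : R) p : r != 0 -> qcomplex (qscale r p) -> qcomplex p.
Proof.
move=> rn; case: p => p0 p1 p2 p3; rewrite /qcomplex /qscale /= => -[h2 h3].
by split; apply: (mulfI rn); rewrite mulr0.
Qed.

Lemma qcpx_nq a : qcomplex (qmul (qconj a) a).
Proof. qdes; rewrite /qcomplex /=; split; ring. Qed.

Lemma mscal_lmul h k (M : mat2 R) : mmul (mscal h) (lmul k M) = lmul (qmul h k) M.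
Proof. qring. Qed.
Lemma lmul1 (M : mat2 R) : lmul (qone R) M = M.
Proof. qring. Qed.

Lemma qreal_add P Q : qreal P -> qreal Q -> qreal (qadd P Q).
Proof. qdes; rewrite /qreal /= => -[-> [-> ->]] [-> [-> ->]]; rewrite addr0. by []. Qed.
Lemma qreal_addinv P Q : qreal (qadd P Q) -> qreal P -> qreal Q.
Proof. qdes; rewrite /qreal /= => -[h1 [h2 h3]] [e1 [e2 e3]]; split; [|split]; lra. Qed.
Lemma qreal_Im Y : qreal (qsub Y (qconj Y)) -> qreal Y.
Proof. qdes; rewrite /qreal /= => -[h1 [h2 h3]]; split; [|split]; lra. Qed.
Lemma qreal_Im' Y : qreal (qsub (qconj Y) Y) -> qreal Y.
Proof. qdes; rewrite /qreal /= => -[h1 [h2 h3]]; split; [|split]; lra. Qed.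
Lemma kill1 (r : R) x y : qadd (qscale r (qsub x x)) y = y.
Proof. qring. Qed.
Lemma kill2 (r : R) x y : qadd (qmul i (qconj (qscale r (qsub x x)))) y = y.
Proof. qring. Qed.
Lemma kill3 (r : R) x y : qadd y (qscale r (qsub (qmul (qmul x i) (qconj x)) (qmul (qmul x i) (qconj x)))) = y.
Proof. qring. Qed.
Lemma CD_id a c d : qmul (qconj (qmul (qconj a) c)) (qmul (qconj a) d) = qscale (qN a) (qmul (qconj c) d).
Proof. qring. Qed.
Lemma ADBC a c d : qsub (qmul (qmul (qconj a) a) (qmul (qconj a) d)) (qmul (qmul (qconj a) c) (qmul (qconj c) d))
   = qscale (qN a - qN c) (qmul (qconj a) d).
Proof. qring. Qed.
Lemma qscale1 p : qscale 1 p = p.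
Proof. qring. Qed.

Lemma fwd a b c d : in_Sp11 (Mat2 a b c d) ->
 (forall u, in_SU11 u -> forall gi, mmul (Mat2 a b c d) gi = mone R -> mmul gi (Mat2 a b c d) = mone R ->
    qreal (mtrace (mmul (mmul (Mat2 a b c d) u) gi))) ->
 exists h u, unit_quat h /\ in_SU11 u /\ Mat2 a b c d = mmul (mscal h) u.
Proof.
move=> Hsp Htr.
have gl := ginv_l Hsp; have gr := ginv_r Hsp.
have hX : qreal (XX a b c d) by rewrite -T1; exact: Htr _ (@v1_SU R) _ gr gl.
have hW : qreal (WW a b c d) by [].
have hXW := qreal_add hW hX.
have hY : qreal (YY a b c d).
  apply: qreal_Im; apply: (qreal_addinv _ hXW); rewrite -T2; exact: Htr _ (@v2_SU R) _ gr gl.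
have hZ : qreal (ZZ a b c d).
  apply: qreal_Im'; apply: (qreal_addinv _ hXW); rewrite -T3; exact: Htr _ (@v3_SU R) _ gr gl.
have hbc := Nb_Nc Hsp; case: (sp_facts Hsp) => ha hd e.
have H2 := qreal_conjmul a hY; rewrite I2 e kill1 in H2.
have H3 := qreal_conjmul a hZ; rewrite I3 e kill2 in H3.
have H1 := qreal_scale (qN a ^+ 2) (qreal_conjmul a hX); rewrite I1 e kill3 in H1.
have n1 : 1 <= qN a by rewrite ha; have := qN_ge0 c; lra.
have n0 : 0 < qN a by lra.
have nn : qN a != 0 by rewrite gt_eqF.
have HC : qN (qmul (qconj a) c) = qN a * (qN a - 1) by rewrite qN_mul qN_conj ha; ring.
have HD : qN (qmul (qconj a) d) = qN a ^+ 2 by rewrite qN_mul qN_conj hd hbc -ha; ring.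
have [cC cD] := core n1 HC HD H2 H3 H1.
have cB : qcomplex (qmul (qconj a) b).
  apply: (qcpx_unscale nn); rewrite e -CD_id; exact: qcpx_mul (qcpx_conj cC) cD.
have cA := qcpx_nq a.
have [ep [ce ne eD]] := sqrt_phase n0 cD HD.
pose m := qN (qmul a ep).
have hm : m = qN a * qN ep by rewrite /m qN_mul.
have m0 : 0 < m by rewrite hm mulr_gt0.
pose s := (Num.sqrt m)^-1.
have s2 : s^+2 * m = 1 by rewrite /s exprVn sqr_sqrtr ?ltW // mulVf // gt_eqF.
pose h := qscale s (qmul a ep).
have Hh : unit_quat h.
  change (qN h = 1); rewrite /h qN_scale -/m s2 //.
exists h, (lmul (qconj h) (Mat2 a b c d)).
split => //; split; last by rewrite mscal_lmul unit_mulconj' // lmul1.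
split.
- rewrite /= !hx_lemma.
  split; [|split; [|split]]; apply: qcpx_scale; apply: qcpx_mul => //; exact: qcpx_conj.
- rewrite /= !hx_lemma det_lemma //; try exact: qcpx_conj.
  rewrite (qcpx_comm cB cC) e ADBC.
  have -> : qN a - qN c = 1 by rewrite ha; ring.
  rewrite qscale1 eD; apply: quatP; rewrite /qscale /= ?mulr0 //.
  by rewrite -hm s2.
- exact: lmul_Sp (unit_conj Hh) Hsp.
Qed.
End S.

End T9.
Import T9.

Theorem proposition4p3 (R : realType) (g : mat2 R) :
  in_Sp11 g ->
  ((forall u : mat2 R, in_SU11 u ->
      forall gi : mat2 R, mmul g gi = mone R -> mmul gi g = mone R ->
        qreal (mtrace (mmul (mmul g u) gi)))
   <->
   (exists h : quat R, exists u : mat2 R,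
      unit_quat h /\ in_SU11 u /\ g = mmul (mscal h) u)).
Proof.
case: g => a b c d Hsp; split; first exact: fwd.
move=> [h [u [Hh [Hu Eg]]]] v Hv gi H1 H2; exact (@back R _ h u Hh Hu Eg v Hv gi H1 H2).
Qed.
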